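(* Let $k$ be a positive integer, let $D$ be a digraph containing no subdivision of $B(k,1;k)$, let $\mathcal{C}$ be a $k$-suitable collection of directed cycles of $D$, and let $C_1\in\mathcal{C}$. Then the digraph $I^+(C_1)$ contains no directed cycle.
   Context: A collection $\mathcal{C}$ of directed cycles is $k$-suitable if every cycle of $\mathcal{C}$ has length at least $8k$ and for any two distinct $C_i,C_j\in\mathcal{C}$, the set $V(C_i)\cap V(C_j)$ is either empty or the vertex set of a directed path $P_{i,j}$ with at most $k$ vertices which is a subpath of both $C_i$ and $C_j$; $s_{i,j}$, $t_{i,j}$ denote the initial and terminal vertices of $P_{i,j}$. For a directed cycle $C$ and vertices $a,b$ on it, $C[a,b]$ is the directed subpath of $C$ from $a$ to $b$, and $C]a,b]$ denotes it with $a$ removed. $\mathcal{C}\cap C_1$ denotes the set of cycles of $\mathcal{C}$ other than $C_1$ sharing a vertex with $C_1$. For $C_j\in\mathcal{C}\cap C_1$, let $t(Q_j)$ be the vertex of $C_j$ with $C_j[t_{1,j},t(Q_j)]$ of length $3k$, and $Q^+_j=C_j]t_{1,j},t(Q_j)]$. $I^+(C_1)=\bigcup_{C_j\in\mathcal{C}\cap C_1}Q^+_j$ (union of digraphs). A digraph contains a subdivision of $B(k_1,k_2;k_3)$ if there exist distinct vertices $u,w$ and three pairwise internally vertex-disjoint directed paths: two from $u$ to $w$ of lengths at least $k_1$ and $k_2$, and one from $w$ to $u$ of length at least $k_3$. *)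

(* Defs.v *)
From mathcomp Require Import all_boot.
Set Implicit Arguments.
Unset Strict Implicit.
Unset Printing Implicit Defensive.

Section Digraphs.
Variable V : finType.

Fixpoint ppath (A : V -> V -> Prop) (x : V) (s : seq V) : Prop :=
  match s with
  | [::] => True
  | y :: s' => A x y /\ ppath A y s'
  end.

(* A directed cycle of the digraph with arc relation A, given by its cyclic
   sequence of (pairwise distinct, at least 2) vertices; its length is size c. *)
Definition dicycle (A : V -> V -> Prop) (c : seq V) : Prop :=
  match c with
  | [::] => False
  | x :: s => uniq c /\ 2 <= size c /\ ppath A x (rcons s x)
  end.

(* Directed path x :: s in (V,E), from x to [last x s], of length [size s]. *)
Definition dipath (E : rel V) (x : V) (s : seq V) : bool :=
  uniq (x :: s) && path E x s.

Definition interior (x : V) (s : seq V) : seq V := behead (belast x s).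

Definition disj (s1 s2 : seq V) : Prop := forall v, v \in s1 -> v \notin s2.

Definition has_B_subdiv (E : rel V) (k1 k2 k3 : nat) : Prop :=
  exists (u w : V) (s1 s2 s3 : seq V),
    [/\ u != w,
        [/\ dipath E u s1, last u s1 = w & k1 <= size s1],
        [/\ dipath E u s2, last u s2 = w & k2 <= size s2],
        [/\ dipath E w s3, last w s3 = u & k3 <= size s3] &
        [/\ s1 != s2,
            disj (interior u s1) (interior u s2),
            disj (interior u s1) (interior w s3) &
            disj (interior u s2) (interior w s3)]].

Definition subpath_of_cycle (P c : seq V) : Prop :=
  exists n, prefix P (rot n c).

Definition is_Pij (ci cj P : seq V) : Prop :=
  [/\ P != [::], subpath_of_cycle P ci, subpath_of_cycle P cj &
      forall v, v \in P <-> (v \in ci /\ v \in cj)].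

Definition k_suitable (E : rel V) (k : nat) (I : finType) (C : I -> seq V) : Prop :=
  (forall i, dicycle (fun u v => E u v) (C i) /\ 8 * k <= size (C i)) /\
  (forall i j, i != j ->
     (forall v, v \in C i -> v \notin C j) \/
     (exists P, is_Pij (C i) (C j) P /\ size P <= k)).

Definition cyc_from (c : seq V) (a : V) : seq V := rot (index a c) c.

Definition seq_arc (s : seq V) (u v : V) : Prop :=
  exists s1 s2, s = s1 ++ u :: v :: s2.

(* Q^+_j = C_j]t_{1,j}, t(Q_j)] as a vertex sequence: the 3k vertices
   following t on C_j. *)
Definition Qplus (k : nat) (cj : seq V) (t : V) : seq V :=
  take (3 * k) (behead (cyc_from cj t)).

(* Arc relation of the digraph I^+(C_{i1}) = union of the Q^+_j over the
   cycles C_j (j != i1) meeting C_{i1}; t_{1,j} is the last vertex of P_{1,j}. *)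
Definition Iplus_arc (k : nat) (I : finType) (C : I -> seq V) (i1 : I)
    (u v : V) : Prop :=
  exists j, [/\ j != i1, (exists x, x \in C i1 /\ x \in C j) &
    exists (s : V) (P : seq V),
      is_Pij (C i1) (C j) (s :: P) /\
      seq_arc (Qplus k (C j) (last s P)) u v].

End Digraphs.

(* Main.v *)
Require Import Defs.
From mathcomp Require Import all_boot zify.
Set Implicit Arguments. Unset Strict Implicit. Unset Printing Implicit Defensive.
Ltac slia := repeat match goal with
  | H : is_true (leq _ _) |- _ => revert H
  | H : @eq nat _ _ |- _ => revert H
  end;
  rewrite ?[size (_ :: _)]/=;
  repeat (match goal with |- context [@size ?T ?c] => let n := fresh "n" in set n := @size T c end);
  repeat match goal with H : _ |- _ => clear H end;
  intros; lia.

Notation it c m a := (iter m (next c) a).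


Section Cyc.
Variable V : finType.
Implicit Types (c : seq V) (a : V).

Lemma mem_size_gt0 c a : a \in c -> 0 < size c.
Proof. by case: c. Qed.

Lemma next_nth_mod c (x0 : V) r : uniq c -> r < size c ->
  next c (nth x0 c r) = nth x0 c (r.+1 %% size c).
Proof.
move=> Uc rlt; have rin : nth x0 c r \in c by rewrite mem_nth.
rewrite next_nth rin.
case: c Uc rlt rin => // y c' Uc rlt rin.
rewrite index_uniq //.
case: (ltngtP r.+1 (size (y :: c'))) => [lt|gt|eq].
- by rewrite modn_small // (set_nth_default y) //.
- by lia.
- move: eq => /= [eqr]; rewrite -eqr modnn /= nth_default //.
  by rewrite eqr.
Qed.

Lemma it_nth c a m : uniq c -> a \in c ->
  iter m (next c) a = nth a c ((index a c + m) %% size c).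
Proof.
move=> Uc ac; have n0 : 0 < size c := mem_size_gt0 ac.
elim: m => [|m IH].
  by rewrite addn0 modn_small ?index_mem // nth_index.
rewrite iterS IH next_nth_mod // ?ltn_mod //.
by rewrite -addn1 modnDml addn1 addnS.
Qed.



Lemma it_mem c m a : a \in c -> it c m a \in c.
Proof. by move=> ac; elim: m => //= m IH; rewrite mem_next. Qed.

Lemma it_size c a : uniq c -> a \in c -> it c (size c) a = a.
Proof.
move=> Uc ac; rewrite it_nth // modnDr modn_small ?index_mem //.
exact: nth_index.
Qed.

Lemma it_mod c a m : uniq c -> a \in c -> it c m a = it c (m %% size c) a.
Proof. by move=> Uc ac; rewrite !it_nth // modnDmr. Qed.

Lemma it_inj c a m m' : uniq c -> a \in c -> it c m a = it c m' a ->
  m %% size c = m' %% size c.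
Proof.
move=> Uc ac; have n0 : 0 < size c := mem_size_gt0 ac.
rewrite !it_nth // => /eqP; rewrite nth_uniq ?ltn_mod // => /eqP.
by move/eqP; rewrite eqn_modDl => /eqP.
Qed.

Lemma it_inj_lt c a m m' : uniq c -> a \in c -> m < size c -> m' < size c ->
  it c m a = it c m' a -> m = m'.
Proof. by move=> Uc ac lm lm' /it_inj => /(_ Uc ac); rewrite !modn_small. Qed.

Lemma it_surj c a y : uniq c -> a \in c -> y \in c ->
  exists2 m, m < size c & y = it c m a.
Proof.
move=> Uc ac yc; have n0 : 0 < size c := mem_size_gt0 ac.
exists ((size c - index a c + index y c) %% size c); first by rewrite ltn_mod.
rewrite it_nth // modnDmr addnA subnKC ?(ltnW (index_mem _ _)) ?index_mem //.
  by rewrite modnDl modn_small ?index_mem // nth_index.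
by rewrite index_size.
Qed.

Lemma rot_it c r b s' i : uniq c -> rot r c = b :: s' -> i < size c ->
  nth b (b :: s') i = it c i b.
Proof.
move=> Uc Dr lti.
have Us : uniq (b :: s') by rewrite -Dr rot_uniq.
have bs : b \in b :: s' by rewrite mem_head.
rewrite -(eq_iter (next_rot r Uc)) Dr it_nth // index_head add0n.
by rewrite modn_small // -Dr size_rot.
Qed.

Lemma prefix_it c r b P i : uniq c -> prefix (b :: P) (rot r c) ->
  i < size (b :: P) -> nth b (b :: P) i = it c i b.
Proof.
move=> Uc /prefixP[s2 Ds] lti.
have : rot r c = b :: (P ++ s2) by rewrite Ds.
move=> /(rot_it) H; rewrite -H //.
  by rewrite -cat_cons nth_cat lti.
by rewrite -(size_rot r) Ds size_cat (leq_trans lti) ?leq_addr.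
Qed.

Lemma prefix_mem c r b P : prefix (b :: P) (rot r c) -> b \in c.
Proof.
by move=> /prefixP[s2 Ds]; rewrite -(mem_rot r) Ds mem_head.
Qed.

Lemma qplus_it (k : nat) c t i : uniq c -> t \in c -> 3 * k < size c -> i < 3 * k ->
  nth t (Qplus k c t) i = it c i.+1 t.
Proof.
move=> Uc tc lk li; rewrite /Qplus /cyc_from nth_take //.
have := rot_index tc => Dr.
by rewrite Dr nth_behead (rot_it Uc Dr) // (leq_trans _ lk).
Qed.

Lemma size_qplus (k : nat) c t : t \in c -> 3 * k < size c -> size (Qplus k c t) = 3 * k.
Proof.
move=> tc lk; rewrite /Qplus /cyc_from size_take size_behead size_rot.
by case: ltnP => //; lia.
Qed.


Lemma traject_map (f : V -> V) a m :
  traject f a m = [seq iter i f a | i <- iota 0 m].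
Proof.
elim: m a => //= m IH a; rewrite IH; congr (_ :: _).
rewrite -[in RHS](addn0 1) iotaDl -map_comp; apply: eq_map => i /=.
by rewrite add0n -iterS iterSr.
Qed.

Lemma traj_uniq c a m : uniq c -> a \in c -> m <= size c ->
  uniq (traject (next c) a m).
Proof.
move=> Uc ac lm; rewrite traject_map map_inj_in_uniq ?iota_uniq //.
move=> i j; rewrite !mem_iota !add0n => li lj /(it_inj_lt Uc ac) -> //.
  exact: leq_trans li lm.
exact: leq_trans lj lm.
Qed.

Lemma traj_mem c a m y : y \in traject (next c) (next c a) m ->
  exists2 i, 0 < i <= m & y = it c i a.
Proof.
move=> /trajectP[i li ->]; exists i.+1; first by rewrite ltnS li.
by rewrite iterSr.
Qed.

Lemma traj_path (E : rel V) c a m : (forall y, y \in c -> E y (next c y)) ->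
  a \in c -> path E a (traject (next c) (next c a) m).
Proof.
move=> cyc; elim: m a => //= m IH a ac; rewrite cyc //= IH //.
by rewrite mem_next.
Qed.

Lemma interior_mem (x v : V) s : v \in interior x s -> v \in s /\ (uniq s -> v != last x s).
Proof.
case: s => // y s; rewrite /interior /= => vin; split.
  exact: mem_belast vin.
rewrite -cons_uniq lastI rcons_uniq => /andP[nin _].
by apply/eqP=> E; rewrite E in vin; rewrite vin in nin.
Qed.


Lemma BL (E : rel V) (k : nat) c1 cj cl tl tj x p p' d1 :
  uniq c1 -> uniq cj -> uniq cl ->
  (forall y, y \in c1 -> E y (next c1 y)) ->
  (forall y, y \in cj -> E y (next cj y)) ->
  (forall y, y \in cl -> E y (next cl y)) ->
  tl \in c1 -> tl \in cl -> tj \in cj ->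
  tj = it c1 d1 tl -> 0 < d1 -> d1 < size c1 ->
  x = it cl p' tl -> 0 < p' -> p' + k <= size cl ->
  x = it cj p tj -> 0 < p -> p < size cj ->
  (forall i, 0 < i <= p -> it cj i tj \notin c1) ->
  (forall i, i < p -> it cj i tj \notin cl) ->
  (forall i, 0 < i <= d1 -> it c1 i tl \notin cl) ->
  k <= d1 + p -> 0 < k ->
  has_B_subdiv E k 1 k.
Proof.
move=> U1 Uj Ul A1 Aj Al tl1 tll tjj Dtj d1p d1n Dx1 p'p p'n Dx2 pp pn H1 H2 H3 klen kp.
have p'lt : p' < size cl by lia.
set s1a := traject (next c1) (next c1 tl) d1.
set s1b := traject (next cj) (next cj tj) p.
set s2 := traject (next cl) (next cl tl) p'.
set s3 := traject (next cl) (next cl x) (size cl - p').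
have xl : x \in cl by rewrite Dx1 it_mem.
have xn1 : x \notin c1 by rewrite Dx2 H1 // pp leqnn.
have U1s : uniq (tl :: s1a ++ s1b).
  rewrite -cat_cons cat_uniq; apply/and3P; split.
  - by rewrite /s1a -[_ :: _]/(traject (next c1) tl d1.+1) traj_uniq.
  - apply/hasPn => v /traj_mem[i /andP[i0 il] ->]; apply/negP => vin.
    have : it cj i tj \in c1.
      move: vin; rewrite inE => /orP[/eqP -> // | ].
      by rewrite /s1a => /traj_mem[j _ ->]; rewrite it_mem.
    by apply/negP; apply: H1; rewrite i0 il.
  - have : uniq (traject (next cj) tj p.+1) by rewrite traj_uniq.
    by rewrite /= => /andP[_].
have lastS1 : last tl (s1a ++ s1b) = x.
  by rewrite last_cat /s1a last_traject -Dtj /s1b last_traject -Dx2.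
have int1 : forall v, v \in interior tl (s1a ++ s1b) -> v \notin cl.
  move=> v /interior_mem[vin Hl].
  have vx : v != x by rewrite -lastS1 Hl //; move: U1s => /andP[].
  move: vin vx; rewrite mem_cat => /orP[] /traj_mem[i /andP[i0 ilt] ->] vx.
    by apply: H3; rewrite i0 ilt.
  apply: H2; rewrite ltn_neqAle ilt andbT; apply/eqP => ip.
  by move: vx; rewrite ip -Dx2 eqxx.
have int2 : forall v, v \in interior tl s2 -> exists2 i, 0 < i < p' & v = it cl i tl.
  move=> v /interior_mem[vin Hl].
  have U2 : uniq s2.
    have : uniq (traject (next cl) tl p'.+1) by rewrite traj_uniq.
    by rewrite /= => /andP[].
  have := Hl U2; rewrite /s2 last_traject -Dx1.
  move: vin => /traj_mem[i /andP[i0 ilt] ->] ne; exists i => //.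
  by rewrite i0 ltn_neqAle ilt andbT; apply/eqP => ip; move: ne; rewrite ip -Dx1 eqxx.
have int3 : forall v, v \in interior x s3 -> exists2 i, p' < i < size cl & v = it cl i tl.
  move=> v /interior_mem[vin Hl].
  have U3 : uniq s3.
    have : uniq (traject (next cl) x (size cl - p').+1) by rewrite traj_uniq //; slia.
    by rewrite /= => /andP[].
  have := Hl U3; rewrite /s3 last_traject Dx1 -iterD subnK ?(leq_trans _ p'n) ?leq_addr //.
  rewrite it_size //.
  move: vin => /traj_mem[i /andP[i0 ilt] ->] ne; exists (i + p').
    rewrite -{1}(add0n p') ltn_add2r i0 /=.
    rewrite ltn_neqAle; apply/andP; split.
      by apply/eqP => ip; move: ne; rewrite Dx1 -iterD ip it_size // eqxx.
    by rewrite -(subnK (leq_trans (leq_addr _ _) p'n)) leq_add2r.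
  by rewrite Dx1 -iterD.
exists tl, x, (s1a ++ s1b), s2, s3; split.
- by apply/eqP => ex; move: xn1; rewrite -ex tl1.
- split => //.
  + by rewrite /dipath U1s /= cat_path /s1a traj_path //= last_traject -Dtj traj_path.
  + by rewrite size_cat /s1a /s1b !size_traject.
- split.
  + rewrite /dipath -[_ :: _]/(traject (next cl) tl p'.+1) traj_uniq //.
    exact: traj_path.
  + by rewrite /s2 last_traject.
  + by rewrite /s2 size_traject.
- split.
  + rewrite /dipath -[_ :: _]/(traject (next cl) x (size cl - p').+1) traj_uniq //.
      exact: traj_path.
    slia.
  + rewrite /s3 last_traject Dx1 -iterD subnK; last by slia.
    by rewrite it_size.
  + rewrite /s3 size_traject; slia.
- split.
  + apply/eqP => e12.
    have : next c1 tl \in cl.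
      have : next c1 tl \in s1a ++ s1b.
        by rewrite mem_cat; apply/orP; left; apply/trajectP; exists 0.
      by rewrite e12 => /traj_mem[i _ ->]; rewrite it_mem.
    by apply/negP; rewrite -[next c1 tl]/(it c1 1 tl); apply: H3; rewrite d1p.
  + move=> v /int1 vn; apply/negP => /interior_mem[/traj_mem[i _ ev] _]; move: vn; rewrite ev.
    by move/negP; apply; exact: it_mem.
  + move=> v /int1 vn; apply/negP => /interior_mem[/traj_mem[i _ ev] _]; move: vn; rewrite ev.
    by move/negP; apply; exact: it_mem.
  + move=> v /int2[i /andP[i0 ilt] ->]; apply/negP => /int3[j /andP[jl jn] eij].
    have := it_inj_lt Ul tll _ jn eij.
    have il : i < size cl by slia.
    move=> /(_ il) e; slia.
Qed.

End Cyc.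



Section Pij.
Variable V : finType.
Implicit Types (c : seq V).

Lemma subpath_facts c b P' : uniq c -> subpath_of_cycle (b :: P') c ->
  b \in c /\ (forall i, i < size (b :: P') -> nth b (b :: P') i = it c i b).
Proof.
move=> Uc [r pr]; split; first exact: prefix_mem pr.
by move=> i li; apply: prefix_it pr li.
Qed.

Lemma subpath_uniq c P : uniq c -> subpath_of_cycle P c -> uniq P.
Proof. by move=> Uc [r pr]; apply: prefix_uniq pr _; rewrite rot_uniq. Qed.

Lemma last_it c b P' : (forall i, i < size (b :: P') -> nth b (b :: P') i = it c i b) ->
  last b P' = it c (size P') b.
Proof. by move=> H; rewrite -H // -[size P']/((size (b :: P')).-1) nth_last. Qed.

Lemma mem_it c b P' y : (forall i, i < size (b :: P') -> nth b (b :: P') i = it c i b) ->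
  y \in b :: P' -> exists2 i, i < size (b :: P') & y = it c i b.
Proof.
move=> H yin; exists (index y (b :: P')); first by rewrite index_mem.
by rewrite -H ?index_mem // nth_index.
Qed.

Lemma away c c' b P' m : uniq c -> b \in c ->
  (forall i, i < size (b :: P') -> nth b (b :: P') i = it c i b) ->
  (forall y, y \in c -> y \in c' -> y \in b :: P') ->
  0 < m -> m <= size c - size (b :: P') -> it c m (last b P') \notin c'.
Proof.
move=> Uc bc H Hm m0 mle; apply/negP => yin.
have yc : it c m (last b P') \in c by rewrite (last_it H); apply: it_mem; apply: it_mem.
have [i li ei] := mem_it H (Hm _ yc yin).
move: ei; rewrite (last_it H) -iterD => ei.
have il : i < size c by slia.
have ml : m + size P' < size c by slia.
have := it_inj_lt Uc bc ml il ei; slia.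
Qed.

End Pij.



Lemma ppath_path (V : finType) (E : rel V) x s : ppath (fun u v => E u v) x s -> path E x s.
Proof. by elim: s x => //= y s IH x [-> /IH]. Qed.

Lemma ppath_pred (V : finType) (A : V -> V -> Prop) x s v : ppath A x s -> v \in s ->
  exists z, z \in x :: s /\ A z v.
Proof.
elim: s x => //= y s IH x [Axy ps]; rewrite inE => /orP[/eqP -> | vs].
  by exists x; rewrite mem_head.
have [z [zin Az]] := IH _ ps vs; exists z; split => //.
by rewrite inE zin orbT.
Qed.

Lemma dicycle_pred (V : finType) (A : V -> V -> Prop) c v : dicycle A c -> v \in c ->
  exists z, z \in c /\ A z v.
Proof.
case: c => // x s [_ [_ pp]] vin.
have vr : v \in rcons s x by rewrite mem_rcons.
have [z [zin Az]] := ppath_pred pp vr.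
exists z; split => //; move: zin; rewrite in_cons mem_rcons => /orP[/eqP->|//].
exact: mem_head.
Qed.

Section Main.
Variables (V : finType) (E : rel V) (k : nat) (I : finType) (C : I -> seq V) (i1 : I).
Hypothesis kpos : 0 < k.
Hypothesis ks : k_suitable E k C.

Lemma Cuniq j : uniq (C j).
Proof. by case: (ks) => /(_ j) [] ; case: (C j) => // x s [U _]. Qed.

Lemma Csize j : 8 * k <= size (C j).
Proof. by case: (ks) => /(_ j) []. Qed.

Lemma Carc j y : y \in C j -> E y (next (C j) y).
Proof.
case: (ks) => /(_ j) [] + _ _; case: (C j) => // x s [_ [_ pp]].
by apply: next_cycle; rewrite /cycle; apply: ppath_path.
Qed.

Lemma pij_size i j P : i != j -> is_Pij (C i) (C j) P -> size P <= k.
Proof.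
move=> ij [Pn sp1 sp2 Hm]; case: (ks) => _ /(_ i j ij) [dj | [P0 [[P0n sp01 _ Hm0] sz]]].
  case: P Pn sp1 sp2 Hm => // b P' _ _ _ Hm.
  have [bi bj] := proj1 (Hm b) (mem_head _ _).
  by move: (dj _ bi); rewrite bj.
have U : uniq P := subpath_uniq (Cuniq i) sp1.
have U0 : uniq P0 := subpath_uniq (Cuniq i) sp01.
rewrite (perm_size (uniq_perm U U0 _)) //.
move=> y; apply/idP/idP => H.
  by apply/(Hm0 y); apply/(Hm y).
by apply/(Hm y); apply/(Hm0 y).
Qed.

Definition Exit j t := j != i1 /\ exists b P', is_Pij (C i1) (C j) (b :: P') /\ last b P' = t.


Lemma exit_mem j t : Exit j t -> t \in C i1 /\ t \in C j.
Proof.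
move=> [_ [b [P' [[_ _ _ Hm] <-]]]]; apply/Hm.
exact: mem_last.
Qed.

Lemma exit_ne j t : Exit j t -> j != i1.
Proof. by case. Qed.

Lemma exit_head j t : Exit j t -> exists b q, [/\ b \in C j, 0 < q, q <= k & t = it (C j) q.-1 b].
Proof.
move=> [ji [b [P' [pij <-]]]]; exists b, (size (b :: P')).
have [_ _ sp _] := pij.
have [bc H] := subpath_facts (Cuniq j) sp.
split => //; first by rewrite eq_sym in ji; exact: (pij_size ji pij).
exact: last_it H.
Qed.

Lemma exit_awayj j t m : Exit j t -> 0 < m -> m <= 7 * k -> it (C j) m t \notin C i1.
Proof.
move=> [ji [b [P' [pij <-]]]] m0 mk.
have [_ _ sp Hm] := pij.
have [bc H] := subpath_facts (Cuniq j) sp.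
apply: away (Cuniq j) bc H _ m0 _.
  by move=> y yj y1; apply/Hm.
have := Csize j.
rewrite eq_sym in ji; have := pij_size ji pij; slia.
Qed.


Lemma it_wrap (c : seq V) (a : V) r : uniq c -> a \in c -> it c (size c + r) a = it c r a.
Proof. by move=> Uc ac; rewrite addnC iterD it_size. Qed.

Lemma chord_avoid l t y d : Exit l t -> y \in C i1 -> y \notin C l ->
  y = it (C i1) d t -> d < size (C i1) ->
  forall i, 0 < i <= d -> it (C i1) i t \notin C l.
Proof.
move=> [li [b [P' [pij <-]]]] y1 yl Dy dn i /andP[i0 id].
have [_ sp _ Hm] := pij.
have [bc H] := subpath_facts (Cuniq i1) sp.
case: (leqP d (size (C i1) - size (b :: P'))) => dq.
  apply: away (Cuniq i1) bc H _ i0 _; last by slia.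
  by move=> z z1 zl; apply/Hm.
exfalso; move/negP: yl; apply.
have : y \in b :: P'.
  rewrite Dy (last_it H) -iterD.
  have -> : d + size P' = size (C i1) + (d + size P' - size (C i1)) by slia.
  rewrite it_wrap ?Cuniq //.
  have rlt : d + size P' - size (C i1) < size (b :: P') by slia.
  by have := mem_nth b rlt; rewrite H.
by move/Hm => [].
Qed.

Lemma exit_unique j t t' : Exit j t -> Exit j t' -> t = t'.
Proof.
move=> [ji [b [P' [pij <-]]]] [_ [b2 [P2 [pij2 <-]]]].
have [_ _ sp Hm] := pij; have [_ _ sp2 Hm2] := pij2.
have [bc H] := subpath_facts (Cuniq j) sp.
have [bc2 H2] := subpath_facts (Cuniq j) sp2.
have U : uniq (b :: P') := subpath_uniq (Cuniq j) sp.
have U2 : uniq (b2 :: P2) := subpath_uniq (Cuniq j) sp2.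
have eqm : (b :: P') =i (b2 :: P2).
  by move=> y; apply/idP/idP => Hy; [apply/(Hm2 y); apply/(Hm y) | apply/(Hm y); apply/(Hm2 y)].
have esz : size (b :: P') = size (b2 :: P2) by apply: perm_size; apply: uniq_perm.
have qk : size (b :: P') <= k by rewrite eq_sym in ji; exact: pij_size ji pij.
have nj := Csize j.
have [a al ea] : exists2 a, a < size (b :: P') & b2 = it (C j) a b.
  by apply: mem_it H _; rewrite eqm mem_head.
have [a' al' ea'] : exists2 a, a < size (b2 :: P2) & b = it (C j) a b2.
  by apply: mem_it H2 _; rewrite -eqm mem_head.
have : it (C j) (a' + a) b = it (C j) 0 b by rewrite iterD -ea -ea'.
move=> /(it_inj_lt (Cuniq j) bc) e.
have {}e : a' + a = 0 by apply: e; slia.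
have a0 : a = 0 by lia.
move: ea; rewrite a0 /= => eb.
rewrite (last_it H) (last_it H2) -eb.
by move: esz => /= [->].
Qed.

Lemma decode u v : Iplus_arc k C i1 u v ->
  exists j t m, [/\ Exit j t, 0 < m, m < 3 * k, u = it (C j) m t & v = it (C j) m.+1 t].
Proof.
move=> [j [ji _ [b [P' [pij [s1 [s2 Ds]]]]]]].
have ex : Exit j (last b P') by split => //; exists b, P'.
have [_ tj] := exit_mem ex.
have nj := Csize j.
have lt3 : 3 * k < size (C j) by slia.
have sq := size_qplus tj lt3.
have hs : size s1 + 2 <= 3 * k by rewrite -sq Ds size_cat /=; slia.
exists j, (last b P'), (size s1).+1; split => //.
- slia.
- rewrite -(qplus_it (Cuniq j) tj lt3); last by slia.
  by rewrite Ds nth_cat ltnn subnn.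
- rewrite -(qplus_it (Cuniq j) tj lt3); last by slia.
  by rewrite Ds nth_cat ltnNge leqnSn /= subSn // subnn.
Qed.


Lemma claim j l b L x : j != l -> b \in C j -> x = it (C j) L b -> L + k <= size (C j) ->
  x \in C l ->
  (forall y, y \in C j -> y \in C l -> next (C j) y = x -> next (C l) y = x -> False) ->
  forall i, i < L -> it (C j) i b \notin C l.
Proof.
move=> jl bj Dx Lk xl NCP i iL; apply/negP => wl.
have xj : x \in C j by rewrite Dx; apply: it_mem.
have wj : it (C j) i b \in C j by apply: it_mem.
case: (ks) => _ /(_ j l jl) [dj | [P [pij sz]]].
  by move: (dj _ xj); rewrite xl.
case: P pij sz => [[]//|b0 P0] pij sz.
have [_ sp1 sp2 Hm] := pij.
have [b0j H1] := subpath_facts (Cuniq j) sp1.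
have [b0l H2] := subpath_facts (Cuniq l) sp2.
have [r1 r1l er1] := mem_it H1 (proj2 (Hm _) (conj wj wl)).
have [r2 r2l er2] := mem_it H1 (proj2 (Hm _) (conj xj xl)).
have e : it (C j) r2 b0 = it (C j) (L - i + r1) b0.
  by rewrite -er2 iterD -er1 -iterD subnK ?Dx // ltnW.
have {}e : r2 = L - i + r1.
  apply: (it_inj_lt (Cuniq j) b0j _ _ e); slia.
have r2p : r2 = (r2 - 1).+1 by lia.
apply: (NCP (it (C j) (r2 - 1) b0)).
- exact: it_mem.
- have rl : r2 - 1 < size (b0 :: P0) by slia.
  rewrite -(H1 _ rl) (H2 _ rl); exact: it_mem.
- by rewrite -iterS -r2p -er2.
- have rl : r2 - 1 < size (b0 :: P0) by slia.
  rewrite -(H1 _ rl) (H2 _ rl) -iterS -r2p -(H2 _ r2l) (H1 _ r2l) -er2 //.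
Qed.


Hypothesis noB : ~ has_B_subdiv E k 1 k.

Lemma no_cycle c : dicycle (Iplus_arc k C i1) c -> False.
Proof.
move=> cyc.
pose Pm m := exists v j t, [/\ v \in c, Exit j t, 0 < m, m <= 3 * k & v = it (C j) m t].
have key : forall m, ~ Pm m.
  elim/ltn_ind => p IH [x [j [tj [xc exj p0 p3 Dx]]]].
  have [z [zc Az]] := dicycle_pred cyc xc.
  have [l [tl [m [exl m0 m3 Dz Dx']]]] := decode Az.
  have pm : p <= m.
    rewrite leqNgt; apply/negP => mp; apply: (IH m mp); exists z, l, tl; split => //; slia.
  have z1 : z \notin C i1 by rewrite Dz; apply: exit_awayj exl m0 _; slia.
  have [tj1 tjj] := exit_mem exj.
  have [tl1 tll] := exit_mem exl.
  have notpred : z <> it (C j) p.-1 tj.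
    move=> ez; case: p IH p0 p3 Dx pm ez => // -[|p] IH _ p3 Dx pm ez.
      by move: z1; rewrite ez /= tj1.
    apply: (IH p.+1 (ltnSn _)); exists z, j, tj; split => //; slia.
  have nj := Csize j; have nl := Csize l; have n1 := Csize i1.
  case: (eqVneq j l) => [ejl | njl].
    subst l; have ett := exit_unique exj exl; rewrite -ett in Dx'.
    have := it_inj_lt (Cuniq j) tjj _ _ (etrans (esym Dx) Dx').
    have h1 : p < size (C j) by slia.
    have h2 : m.+1 < size (C j) by slia.
    by move=> /(_ h1 h2) e; slia.
  have NCP : forall y, y \in C j -> y \in C l -> next (C j) y = x -> next (C l) y = x -> False.
    move=> y yj yl ej el; apply: notpred.
    have ey : y = z.
      apply: (can_inj (prev_next (Cuniq l))).
      by rewrite el Dx' Dz.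
    rewrite -ey; apply: (can_inj (prev_next (Cuniq j))).
    by rewrite ej Dx -iterS prednK.
  have [bj [qj [bjj qj0 qjk Dtj0]]] := exit_head exj.
  have [bl [ql [bll ql0 qlk Dtl0]]] := exit_head exl.
  have xl : x \in C l by rewrite Dx'; apply: it_mem.
  have xj : x \in C j by rewrite Dx; apply: it_mem.
  have H2j : forall i, i < p -> it (C j) i tj \notin C l.
    move=> i ip; rewrite Dtj0 -iterD.
    apply: (claim (L := p + qj.-1) njl bjj _ _ xl NCP); last by slia.
      by rewrite Dx Dtj0 -iterD.
    slia.
  have H2l : forall i, i < m.+1 -> it (C l) i tl \notin C j.
    move=> i ip; rewrite Dtl0 -iterD.
    have NCP' : forall y, y \in C l -> y \in C j -> next (C l) y = x -> next (C j) y = x -> False.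
      by move=> y yl yj el ej; apply: (NCP y yj yl ej el).
    have nlj : l != j by rewrite eq_sym.
    apply: (claim (L := m.+1 + ql.-1) nlj bll _ _ xj NCP'); last by slia.
      by rewrite Dx' Dtl0 -iterD.
    slia.
  have tjl : tj \notin C l by apply: (H2j 0).
  have tlj : tl \notin C j by apply: (H2l 0).
  have [d1 d1l Dtj] := it_surj (Cuniq i1) tl1 tj1.
  have [d2 d2l Dtl] := it_surj (Cuniq i1) tj1 tl1.
  have d1p : 0 < d1 by case: d1 Dtj {d1l} => // Dtj; move: tjl; rewrite Dtj tll.
  have d2p : 0 < d2 by case: d2 Dtl {d2l} => // Dtl; move: tlj; rewrite Dtl tjj.
  have d12 : d2 + d1 = size (C i1).
    have := it_inj (m := d2 + d1) (m' := 0) (Cuniq i1) tl1.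
    rewrite iterD -Dtj -Dtl => /(_ erefl); rewrite mod0n.
    case: (ltnP (d2 + d1) (size (C i1))) => h.
      by rewrite modn_small // => e; slia.
    have -> : d2 + d1 = size (C i1) + (d2 + d1 - size (C i1)) by slia.
    rewrite modnDl modn_small; last by slia.
    move=> e; slia.
  have H3a := chord_avoid exl tj1 tjl Dtj d1l.
  have H3b := chord_avoid exj tl1 tlj Dtl d2l.
  have H1j : forall i, 0 < i <= p -> it (C j) i tj \notin C i1.
    by move=> i /andP[i0 ip]; apply: exit_awayj exj i0 _; slia.
  have H1l : forall i, 0 < i <= m.+1 -> it (C l) i tl \notin C i1.
    by move=> i /andP[i0 ip]; apply: exit_awayj exl i0 _; slia.
  apply: noB.
  case: (leqP k (d1 + p)) => kd.
    apply: (BL (Cuniq i1) (Cuniq j) (Cuniq l) (@Carc i1) (@Carc j) (@Carc l)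
              tl1 tll tjj Dtj d1p d1l Dx' _ _ Dx p0 _ H1j H2j H3a kd kpos) => //; slia.
  apply: (BL (Cuniq i1) (Cuniq l) (Cuniq j) (@Carc i1) (@Carc l) (@Carc j)
            tj1 tjj tll Dtl d2p d2l Dx p0 _ Dx' _ _ H1l H2l H3b _ kpos) => //; slia.
have [x0 x0c] : exists x0, x0 \in c.
  by case: (c) cyc => [[]|x0 s] _; exists x0; rewrite mem_head.
have [z [zc Az]] := dicycle_pred cyc x0c.
have [l [tl [m [exl m0 m3 Dz Dx']]]] := decode Az.
apply: (key m.+1); exists x0, l, tl; split => //; slia.
Qed.

End Main.


Theorem mainTheorem14 (V : finType) (E : rel V) (k : nat)
    (I : finType) (C : I -> seq V) (i1 : I) :
  0 < k ->
  ~ has_B_subdiv E k 1 k ->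
  k_suitable E k C ->
  ~ (exists c : seq V, dicycle (Iplus_arc k C i1) c).
Proof.
move=> kp noB ks [c cyc].
exact: (no_cycle kp ks noB cyc).
Qed.
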